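(* Consider the following reduced-cyclic-prefix (RCP) ODDM system. Let $M,N,Q$ be positive integers, $T_s>0$, $T=MT_s$, and let $a(t)$ be a pulse with $a(t)=0$ for $|t|\ge QT_s$. Given data symbols $X[m,n]\in\mathbb{C}$, $0\le m\le M-1$, $0\le n\le N-1$, define $$x[m,\dot n]=\frac{1}{\sqrt N}\sum_{n=0}^{N-1}X[m,n]e^{j2\pi\frac{n\dot n}{N}},\quad 0\le \dot n\le N-1,$$ and the prefix $x[m,-1]=x[m,N-1]$. The transmitted baseband signal is $$s(t)=\sum_{m=0}^{M-1}\sum_{\dot n=-1}^{N-1}x[m,\dot n]\,a(t-mT_s-\dot nT).$$ The (noiseless) received baseband signal over $P$ paths is $$r(t)=\sum_{i=1}^{P}h_i e^{j2\pi\nu_i t}\,s\big(t-(\tau_i-b_i t)\big),$$ with complex gains $h_i$, delays $\tau_i=l_iT_s$, Doppler scaling factors $b_i$ and Doppler shifts $\nu_i=\frac{k_i}{NMT_s}$ (where $l_i,k_i$ are real, not necessarily integer). Assume $l_{\min}\le l_i\le l_{\max}$ with $l_{\min},l_{\max}$ integers, $|b_i|\le b_{\max}<1$, and that the synchronization is such that $$\lceil l_{\min}-Q-b_{\max}(NM-1)\rceil=0,\qquad l'_{\max}:=\lfloor l_{\max}+Q+b_{\max}(NM-1)\rfloor<M.$$ The receiver samples $y[m,\dot n]=r(mT_s+\dot nT)$ and computes $$Y[m,n]=\frac{1}{\sqrt N}\sum_{\dot n=0}^{N-1}y[m,\dot n]e^{-j2\pi\frac{n\dot n}{N}}.$$ Then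 for all $0\le m\le M-1$, $0\le n\le N-1$, $$Y[m,n]=\sum_{l=0}^{l'_{\max}}\sum_{k=0}^{N-1}X[(m-l)_M,(n-k)_N]\,\phi[m-l,n-k]\,G_l(m,k),$$ where $$G_l(m,k)=\sum_{i=1}^{P}h_i\, e^{j2\pi\frac{k_i m}{NM}}\frac{1}{N}\sum_{\dot n=0}^{N-1}e^{-j2\pi\frac{\dot n(k-k_i)}{N}}\,a\Big(\big(l-l_i+b_i(m+\dot nM)\big)T_s\Big),$$ and, for integers $m',n'$, $$\phi[m',n']=\begin{cases}1,&0\le m'\le M-1,\\ e^{-j2\pi\frac{n'}{N}},&-M+1\le m'<0.\end{cases}$$
   Context: $(x)_M$ denotes $x$ modulo $M$ taken in $\{0,\dots,M-1\}$, and similarly $(x)_N$. $j$ is the imaginary unit. Noise is ignored. The quantities $b_i=\mathrm{v}_i/c$ model the wideband (Doppler squint) effect: each path has a time-varying delay $\tau_i-b_i t$. *)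

(* Defs.v *)
From Stdlib Require Export Reals ZArith List.
From Coquelicot Require Export Coquelicot.
Open Scope R_scope.

Definition cexpj (theta : R) : C := (cos theta, sin theta).

Definition zrange (lo hi : Z) : list Z :=
  map (fun k => (lo + Z.of_nat k)%Z) (seq 0 (Z.to_nat (hi - lo + 1))).

Definition zsum (lo hi : Z) (f : Z -> C) : C :=
  fold_right Cplus (RtoC 0) (map f (zrange lo hi)) .

(* Main.v *)
Require Import Defs.
From Stdlib Require Import Permutation Lia Lra.
Open Scope R_scope.

Lemma zsum_nil lo hi f : (hi < lo)%Z -> zsum lo hi f = RtoC 0.
Proof. intros H. unfold zsum, zrange. replace (Z.to_nat (hi - lo + 1)) with 0%nat by lia. reflexivity. Qed.

Lemma zsum_cons lo hi f : (lo <= hi)%Z -> zsum lo hi f = Cplus (f lo) (zsum (lo+1) hi f).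
Proof.
  intros H. unfold zsum, zrange.
  replace (Z.to_nat (hi - lo + 1)) with (S (Z.to_nat (hi - (lo+1) + 1))) by lia.
  cbn [seq map fold_right]. rewrite Z.add_0_r. f_equal.
  rewrite <- seq_shift, !map_map. erewrite map_ext; [reflexivity|]. intros. simpl. f_equal. lia.
Qed.

Lemma zind (Pr : Z -> Z -> Prop) :
  (forall lo hi, (hi < lo)%Z -> Pr lo hi) ->
  (forall lo hi, (lo <= hi)%Z -> Pr (lo+1)%Z hi -> Pr lo hi) -> forall lo hi, Pr lo hi.
Proof.
  intros H0 H1 lo hi. remember (Z.to_nat (hi - lo + 1)) as n. revert lo Heqn.
  induction n; intros lo Hn.
  - apply H0; lia.
  - destruct (Z_lt_le_dec hi lo). apply H0; lia. apply H1; [lia|]. apply IHn; lia.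
Qed.

Lemma zsum_ext lo hi f g : (forall k, (lo <= k <= hi)%Z -> f k = g k) -> zsum lo hi f = zsum lo hi g.
Proof.
  revert lo hi. apply (zind (fun lo hi => (forall k, (lo <= k <= hi)%Z -> f k = g k) -> zsum lo hi f = zsum lo hi g)).
  - intros. rewrite !zsum_nil; auto.
  - intros lo hi H IH E. rewrite !(zsum_cons lo hi) by auto. rewrite E by lia. rewrite IH; auto.
    intros; apply E; lia.
Qed.

Lemma zsum_ext_all lo hi f g : (forall k, f k = g k) -> zsum lo hi f = zsum lo hi g.
Proof. intros; apply zsum_ext; auto. Qed.

Lemma zsum_plus lo hi f g : zsum lo hi (fun k => Cplus (f k) (g k)) = Cplus (zsum lo hi f) (zsum lo hi g).
Proof.
  revert lo hi. apply zind.
  - intros. rewrite !zsum_nil; auto. ring.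
  - intros lo hi H IH. rewrite !(zsum_cons lo hi) by auto. rewrite IH. ring.
Qed.

Lemma zsum_scal_l c lo hi f : Cmult c (zsum lo hi f) = zsum lo hi (fun k => Cmult c (f k)).
Proof.
  revert lo hi. apply zind.
  - intros. rewrite !zsum_nil; auto. ring.
  - intros lo hi H IH. rewrite !(zsum_cons lo hi) by auto. rewrite <- IH. ring.
Qed.

Lemma zsum_scal_r c lo hi f : Cmult (zsum lo hi f) c = zsum lo hi (fun k => Cmult (f k) c).
Proof.
  rewrite Cmult_comm, zsum_scal_l. apply zsum_ext_all. intros; ring.
Qed.

Lemma zsum_const0 lo hi : zsum lo hi (fun _ => RtoC 0) = RtoC 0.
Proof.
  revert lo hi. apply zind.
  - intros; apply zsum_nil; auto.
  - intros lo hi H IH. rewrite zsum_cons by auto. rewrite IH. ring.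
Qed.

Lemma zsum_zero lo hi f : (forall k, (lo <= k <= hi)%Z -> f k = RtoC 0) -> zsum lo hi f = RtoC 0.
Proof.
  intros H. rewrite (zsum_ext lo hi f (fun _ => RtoC 0)) by auto. apply zsum_const0.
Qed.

Lemma zsum_swap a b c d (F : Z -> Z -> C) :
  zsum a b (fun i => zsum c d (fun j => F i j)) = zsum c d (fun j => zsum a b (fun i => F i j)).
Proof.
  revert a b. apply zind.
  - intros. rewrite zsum_nil by auto. symmetry. apply zsum_zero. intros. apply zsum_nil; auto.
  - intros a b H IH. rewrite zsum_cons by auto. rewrite IH, <- zsum_plus.
    apply zsum_ext_all. intros j. rewrite (zsum_cons a b) by auto. reflexivity.
Qed.

Lemma zsum_split lo mid hi f : (lo <= mid + 1)%Z -> (mid <= hi)%Z ->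
  zsum lo hi f = Cplus (zsum lo mid f) (zsum (mid+1) hi f).
Proof.
  revert lo mid. apply (zind (fun lo mid => (lo <= mid + 1)%Z -> (mid <= hi)%Z ->
    zsum lo hi f = Cplus (zsum lo mid f) (zsum (mid+1) hi f))).
  - intros lo mid H1 H2 H3. rewrite (zsum_nil lo mid) by auto. replace (mid+1)%Z with lo by lia. ring.
  - intros lo mid H IH H2 H3. rewrite (zsum_cons lo hi) by lia. rewrite (zsum_cons lo mid) by lia.
    rewrite IH by lia. ring.
Qed.

Lemma zsum_single k f : zsum k k f = f k.
Proof. rewrite zsum_cons by lia. rewrite zsum_nil by lia. ring. Qed.

Lemma zsum_shift lo hi c lo' hi' f : lo' = (lo + c)%Z -> hi' = (hi + c)%Z ->
  zsum lo hi f = zsum lo' hi' (fun k => f (k - c)%Z).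
Proof.
  intros -> ->. revert lo hi. apply zind.
  - intros. rewrite !zsum_nil by lia. reflexivity.
  - intros lo hi H IH. rewrite (zsum_cons lo hi) by auto. rewrite (zsum_cons (lo+c)) by lia.
    replace (lo + c - c)%Z with lo by lia. replace (lo + c + 1)%Z with (lo + 1 + c)%Z by lia.
    rewrite IH. reflexivity.
Qed.

Lemma zsum_bounds lo hi lo' hi' f : lo = lo' -> hi = hi' -> zsum lo hi f = zsum lo' hi' f.
Proof. intros -> ->; auto. Qed.

Lemma fold_perm (f : Z -> C) l l' : Permutation l l' ->
  fold_right Cplus (RtoC 0) (map f l) = fold_right Cplus (RtoC 0) (map f l').
Proof.
  induction 1; simpl; auto.
  - rewrite IHPermutation; auto.
  - ring.
  - congruence.
Qed.

Lemma in_zrange lo hi k : In k (zrange lo hi) <-> (lo <= k <= hi)%Z.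
Proof.
  unfold zrange. rewrite in_map_iff. split.
  - intros [j [<- Hj]]. apply in_seq in Hj. lia.
  - intros H. exists (Z.to_nat (k - lo)). split. lia. apply in_seq. lia.
Qed.

Lemma nodup_zrange lo hi : NoDup (zrange lo hi).
Proof.
  unfold zrange. apply FinFun.Injective_map_NoDup_in. intros; lia. apply seq_NoDup.
Qed.

Lemma zsum_perm lo hi (g : Z -> Z) f :
  (forall k, (lo <= k <= hi)%Z -> (lo <= g k <= hi)%Z) ->
  (forall k1 k2, (lo <= k1 <= hi)%Z -> (lo <= k2 <= hi)%Z -> g k1 = g k2 -> k1 = k2) ->
  zsum lo hi (fun k => f (g k)) = zsum lo hi f.
Proof.
  intros Hr Hi. unfold zsum. rewrite <- (map_map g f).
  apply fold_perm. apply Permutation_map_same_l.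
  - apply FinFun.Injective_map_NoDup_in. intros x y Hx Hy. apply in_zrange in Hx, Hy. auto.
    apply nodup_zrange.
  - intros y Hy. apply in_map_iff in Hy. destruct Hy as [x [<- Hx]]. apply in_zrange in Hx.
    apply in_zrange. auto.
Qed.

Lemma zsum_concat (F : Z -> C) (Mz : Z) : (0 < Mz)%Z -> forall (K : nat) a b, b = (a + Z.of_nat K - 1)%Z ->
  zsum a b (fun d => zsum (d*Mz) (d*Mz + Mz - 1) F) = zsum (a*Mz) ((b+1)*Mz - 1) F.
Proof.
  intros HM K. induction K; intros a b Hb.
  - rewrite !zsum_nil by nia. reflexivity.
  - rewrite zsum_cons by lia. rewrite (IHK (a+1)%Z b) by lia.
    rewrite (zsum_split (a*Mz) (a*Mz + Mz - 1) ((b+1)*Mz - 1)) by nia.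
    f_equal. apply zsum_bounds; lia.
Qed.

Definition C0 := RtoC 0.

Lemma cexpj_add x y : Cmult (cexpj x) (cexpj y) = cexpj (x + y).
Proof. unfold cexpj, Cmult; simpl. rewrite cos_plus, sin_plus. f_equal; ring. Qed.

Lemma cos_perZ x z : cos (x + 2 * PI * IZR z) = cos x.
Proof.
  destruct (Z_le_gt_dec 0 z).
  - replace z with (Z.of_nat (Z.to_nat z)) by lia. rewrite <- INR_IZR_INZ.
    rewrite <- (cos_period x (Z.to_nat z)). f_equal. ring.
  - replace z with (- Z.of_nat (Z.to_nat (-z)))%Z by lia. rewrite opp_IZR, <- INR_IZR_INZ.
    set (k := Z.to_nat (-z)). rewrite <- (cos_period (x + 2 * PI * - INR k) k). f_equal. ring.
Qed.

Lemma sin_perZ x z : sin (x + 2 * PI * IZR z) = sin x.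
Proof.
  destruct (Z_le_gt_dec 0 z).
  - replace z with (Z.of_nat (Z.to_nat z)) by lia. rewrite <- INR_IZR_INZ.
    rewrite <- (sin_period x (Z.to_nat z)). f_equal. ring.
  - replace z with (- Z.of_nat (Z.to_nat (-z)))%Z by lia. rewrite opp_IZR, <- INR_IZR_INZ.
    set (k := Z.to_nat (-z)). rewrite <- (sin_period (x + 2 * PI * - INR k) k). f_equal. ring.
Qed.

Lemma cexpj_eq x y z : x = y + 2 * PI * IZR z -> cexpj x = cexpj y.
Proof. intros ->. unfold cexpj. rewrite cos_perZ, sin_perZ. reflexivity. Qed.

Lemma RtoC_mult' x y : Cmult (RtoC x) (RtoC y) = RtoC (x * y).
Proof. unfold RtoC, Cmult; simpl. f_equal; ring. Qed.

Lemma divmod_small (Mz r q : Z) : (0 <= r < Mz)%Z -> ((r + q * Mz) mod Mz = r /\ (r + q * Mz) / Mz = q)%Z.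
Proof.
  intros H. split.
  - rewrite Z_mod_plus_full. apply Z.mod_small; auto.
  - rewrite Z_div_plus_full by lia. rewrite Z.div_small by auto. lia.
Qed.

Lemma Cmult_0r (z : C) : Cmult z (RtoC 0) = RtoC 0.
Proof. ring. Qed.

Lemma s_collapse (M N : nat) (Ts : R) (a : R -> C) (x : Z -> Z -> C) (lp u : Z) (li bi tt : R) :
 (0 < M)%nat -> (0 <= lp < Z.of_nat M)%Z -> (0 <= u <= Z.of_nat N * Z.of_nat M - 1)%Z ->
 tt = (IZR u + bi * IZR u - li) * Ts ->
 (forall L, (L < 0 \/ lp < L)%Z -> a ((IZR L - li + bi * IZR u) * Ts) = RtoC 0) ->
 zsum 0 (Z.of_nat M - 1) (fun m0 => zsum (-1) (Z.of_nat N - 1) (fun dn0 =>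
    Cmult (x m0 dn0) (a (tt - IZR m0 * Ts - IZR dn0 * (INR M * Ts))))) =
 zsum 0 lp (fun L => Cmult (x ((u - L) mod Z.of_nat M)%Z ((u - L) / Z.of_nat M)%Z)
                           (a ((IZR L - li + bi * IZR u) * Ts))).
Proof.
  intros HM Hlp Hu Htt Hz.
  set (Mz := Z.of_nat M).
  set (F := fun v => Cmult (x (v mod Mz) (v / Mz))%Z (a ((IZR (u - v) - li + bi * IZR u) * Ts))).
  transitivity (zsum 0 (Mz - 1) (fun m0 => zsum (-1) (Z.of_nat N - 1) (fun dn0 => F (m0 + dn0 * Mz)%Z))).
  { apply zsum_ext; intros m0 Hm0. apply zsum_ext; intros dn0 Hdn0. unfold F.
    destruct (divmod_small Mz m0 dn0) as [E1 E2]. unfold Mz; lia. rewrite E1, E2. f_equal. f_equal.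
    rewrite Htt. rewrite minus_IZR, plus_IZR, mult_IZR. unfold Mz. rewrite <- INR_IZR_INZ. ring. }
  rewrite zsum_swap.
  transitivity (zsum (-1) (Z.of_nat N - 1) (fun d => zsum (d*Mz) (d*Mz + Mz - 1) F)).
  { apply zsum_ext; intros d Hd. rewrite (zsum_shift 0 (Mz - 1) (d * Mz) (d*Mz) (d*Mz+Mz-1)) by lia.
    apply zsum_ext; intros v Hv. f_equal. lia. }
  rewrite (zsum_concat F Mz ltac:(unfold Mz; lia) (S N)) by lia.
  rewrite (zsum_split _ (u - lp - 1) _). 2,3: unfold Mz in *; clear -Hlp Hu; nia.
  rewrite (zsum_split (u - lp - 1 + 1) u _) by (unfold Mz in *; clear -Hlp Hu; nia).
  rewrite (zsum_zero _ (u - lp - 1)), (zsum_zero (u+1)).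
  2:{ intros v Hv. unfold F. rewrite Hz. apply Cmult_0r. lia. }
  2:{ intros v Hv. unfold F. rewrite Hz. apply Cmult_0r. lia. }
  rewrite (zsum_shift (u - lp - 1 + 1) u (- (u - lp)) 0 lp) by lia.
  rewrite <- (zsum_perm 0 lp (fun L => lp - L)%Z) by lia.
  match goal with |- (_ + (?A + _))%C = _ => transitivity A; [ring|] end.
  apply zsum_ext; intros L HL. unfold F. replace (lp - L - - (u - lp))%Z with (u - L)%Z by lia.
  replace (u - (u - L))%Z with L by lia. reflexivity.
Qed.

Lemma a_bound (Q : nat) (Ts li bi lmin lmax bmax K U : R) (lp L : Z) :
  0 < Ts -> lmin <= li <= lmax -> Rabs bi <= bmax -> 0 <= U <= K ->
  lmin - INR Q - bmax * K > -1 -> lmax + INR Q + bmax * K < IZR lp + 1 ->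
  (L < 0 \/ lp < L)%Z -> Rabs ((IZR L - li + bi * U) * Ts) >= INR Q * Ts.
Proof.
  intros HT Hl Hb HU H1 H2 HL.
  assert (Hb' : - bmax <= bi <= bmax) by (apply Rabs_le_between; auto).
  assert (bmax >= 0) by (pose proof (Rabs_pos bi); lra).
  assert (bi * U <= bmax * K) by nra.
  assert (- (bmax * K) <= bi * U) by nra.
  pose proof (pos_INR Q).
  rewrite Rabs_mult, (Rabs_right Ts) by lra.
  apply Rle_ge, Rmult_le_compat_r; [lra|].
  destruct HL as [HL|HL].
  - assert (IZR L <= -1) by (apply IZR_le; lia).
    rewrite Rabs_left by lra. lra.
  - assert (IZR lp + 1 <= IZR L) by (rewrite <- plus_IZR; apply IZR_le; lia).
    rewrite Rabs_right by lra. lra.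
Qed.

Lemma swap4 a1 b1 a2 b2 a3 b3 a4 b4 (W : Z -> Z -> Z -> Z -> C) :
 zsum a1 b1 (fun d => zsum a2 b2 (fun i => zsum a3 b3 (fun L => zsum a4 b4 (fun n' => W d i L n')))) =
 zsum a3 b3 (fun L => zsum a4 b4 (fun n' => zsum a2 b2 (fun i => zsum a1 b1 (fun d => W d i L n')))).
Proof.
  rewrite (zsum_swap a1 b1 a2 b2).
  transitivity (zsum a2 b2 (fun i => zsum a3 b3 (fun L => zsum a4 b4 (fun n' => zsum a1 b1 (fun d => W d i L n'))))).
  { apply zsum_ext_all; intro i. rewrite (zsum_swap a1 b1 a3 b3). apply zsum_ext_all; intro L. apply zsum_swap. }
  rewrite (zsum_swap a2 b2 a3 b3). apply zsum_ext_all; intro L. apply zsum_swap.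
Qed.
Theorem theorem1
  (M N Q P : nat) (HM : (0 < M)%nat) (HN : (0 < N)%nat) (HQ : (0 < Q)%nat)

  (Ts : R) (HTs : 0 < Ts)
  (a : R -> C) (Ha : forall t, Rabs t >= INR Q * Ts -> a t = RtoC 0)
  (X : Z -> Z -> C)
  (h : nat -> C) (l_ k_ b : nat -> R)
  (lmin lmax : Z) (bmax : R)
  (Hl : forall i, (i < P)%nat -> IZR lmin <= l_ i <= IZR lmax)
  (Hb : forall i, (i < P)%nat -> Rabs (b i) <= bmax)
  (Hbmax : bmax < 1)
  (Hsync1 : Zceil (IZR lmin - INR Q - bmax * (INR N * INR M - 1)) = 0%Z)
  (Hsync2 : (Zfloor (IZR lmax + INR Q + bmax * (INR N * INR M - 1)) < Z.of_nat M)%Z) :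
  let T := INR M * Ts in
  let lpmax := Zfloor (IZR lmax + INR Q + bmax * (INR N * INR M - 1)) in
  (* x[m, dn] for 0 <= dn <= N-1 *)
  let x0 := fun (m dn : Z) =>
    Cmult (RtoC (/ sqrt (INR N)))
      (zsum 0 (Z.of_nat N - 1)%Z (fun n =>
         Cmult (X m n) (cexpj (2 * PI * IZR (n * dn) / INR N)))) in
  (* with the reduced cyclic prefix x[m,-1] = x[m,N-1] *)
  let x := fun (m dn : Z) =>
    if (dn =? -1)%Z then x0 m (Z.of_nat N - 1)%Z else x0 m dn in
  let s := fun t : R =>
    zsum 0 (Z.of_nat M - 1)%Z (fun m =>
      zsum (-1)%Z (Z.of_nat N - 1)%Z (fun dn =>
        Cmult (x m dn) (a (t - IZR m * Ts - IZR dn * T)))) in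
  let r := fun t : R =>
    zsum 0 (Z.of_nat P - 1)%Z (fun i =>
      let i' := Z.to_nat i in
      let tau := l_ i' * Ts in
      let nu := k_ i' / (INR N * INR M * Ts) in
      Cmult (Cmult (h i') (cexpj (2 * PI * nu * t)))
            (s (t - (tau - b i' * t)))) in
  let y := fun (m dn : Z) => r (IZR m * Ts + IZR dn * T) in
  let Y := fun (m n : Z) =>
    Cmult (RtoC (/ sqrt (INR N)))
      (zsum 0 (Z.of_nat N - 1)%Z (fun dn =>
         Cmult (y m dn) (cexpj (- (2 * PI * IZR (n * dn) / INR N))))) in
  let G := fun (l m k : Z) =>
    zsum 0 (Z.of_nat P - 1)%Z (fun i =>
      let i' := Z.to_nat i in
      Cmult (Cmult (h i') (cexpj (2 * PI * k_ i' * IZR m / (INR N * INR M))))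
        (Cmult (RtoC (/ INR N))
          (zsum 0 (Z.of_nat N - 1)%Z (fun dn =>
             Cmult (cexpj (- (2 * PI * IZR dn * (IZR k - k_ i') / INR N)))
                   (a ((IZR l - l_ i' + b i' * (IZR m + IZR dn * INR M)) * Ts)))))) in
  (* phi[m',n'] is only used for -M+1 <= m' <= M-1 *)
  let phi := fun (m' n' : Z) =>
    if (0 <=? m')%Z then RtoC 1 else cexpj (- (2 * PI * IZR n' / INR N)) in
  forall m n : Z, (0 <= m <= Z.of_nat M - 1)%Z -> (0 <= n <= Z.of_nat N - 1)%Z ->
    Y m n =
    zsum 0 lpmax (fun l =>
      zsum 0 (Z.of_nat N - 1)%Z (fun k =>
        Cmult (Cmult (X ((m - l) mod Z.of_nat M)%Z ((n - k) mod Z.of_nat N)%Z)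
                     (phi (m - l)%Z (n - k)%Z))
              (G l m k))).
Proof.
  intros T lpmax x0 x s r y Y G phi m n Hm Hn.
  assert (HNr : 0 < INR N) by (apply lt_0_INR; auto).
  assert (HMr : 0 < INR M) by (apply lt_0_INR; auto).
  assert (HNz : IZR (Z.of_nat N) <> 0) by (rewrite <- INR_IZR_INZ; lra).
  assert (HMz : IZR (Z.of_nat M) <> 0) by (rewrite <- INR_IZR_INZ; lra).
  assert (Hs1 : IZR lmin - INR Q - bmax * (INR N * INR M - 1) > -1).
  { pose proof (Zceil_bound (IZR lmin - INR Q - bmax * (INR N * INR M - 1))) as Hc.
    rewrite Hsync1 in Hc. simpl in Hc. lra. }
  assert (Hs2 : IZR lmax + INR Q + bmax * (INR N * INR M - 1) < IZR lpmax + 1).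
  { apply Zfloor_bound. }
  assert (Hcs : Cmult (RtoC (/ sqrt (INR N))) (RtoC (/ sqrt (INR N))) = RtoC (/ INR N)).
  { rewrite RtoC_mult'. f_equal. rewrite <- Rinv_mult. rewrite sqrt_sqrt; lra. }
  assert (Hx : forall m' d, (-1 <= d <= Z.of_nat N - 1)%Z ->
     x m' d = Cmult (RtoC (/ sqrt (INR N))) (zsum 0 (Z.of_nat N - 1) (fun n' =>
        Cmult (X m' n') (cexpj (2 * PI * IZR (n' * d) / INR N))))).
  { intros m' d Hd. unfold x. destruct (Z.eqb_spec d (-1)).
    - subst d. unfold x0. f_equal. apply zsum_ext; intros k Hk. f_equal.
      apply cexpj_eq with (z := k). rewrite !mult_IZR, minus_IZR, INR_IZR_INZ. field. auto.
    - reflexivity. }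
  assert (Hy : forall dn, (0 <= dn <= Z.of_nat N - 1)%Z ->
     y m dn = zsum 0 (Z.of_nat P - 1) (fun i =>
       Cmult (Cmult (h (Z.to_nat i)) (cexpj (2 * PI * (k_ (Z.to_nat i) / (INR N * INR M * Ts)) * (IZR m * Ts + IZR dn * T))))
        (zsum 0 lpmax (fun L =>
           Cmult (Cmult (RtoC (/ sqrt (INR N))) (zsum 0 (Z.of_nat N - 1) (fun n' =>
                Cmult (X ((m - L) mod Z.of_nat M)%Z n')
                  (cexpj (2 * PI * IZR (n' * (dn - (if (0 <=? m - L)%Z then 0%Z else 1%Z))) / INR N)))))
             (a ((IZR L - l_ (Z.to_nat i) + b (Z.to_nat i) * (IZR m + IZR dn * INR M)) * Ts)))))).
  { intros dn Hdn. unfold y, r. apply zsum_ext; intros i Hi. cbv beta zeta.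
    assert (HiP : (Z.to_nat i < P)%nat) by lia.
    set (i' := Z.to_nat i) in *.
    f_equal. unfold s.
    pose proof (Hl i' HiP) as Hli. pose proof (Hb i' HiP) as Hbi.
    assert (Hbm : 0 <= bmax) by (pose proof (Rabs_pos (b i')); lra).
    assert (HK : 0 <= INR N * INR M - 1).
    { assert (1 <= INR N) by (apply (le_INR 1); lia). assert (1 <= INR M) by (apply (le_INR 1); lia). nra. }
    assert (Hlp0 : (0 <= lpmax)%Z).
    { apply Zfloor_lub. assert (1 <= INR Q) by (apply (le_INR 1); lia).
      assert (0 <= bmax * (INR N * INR M - 1)) by (apply Rmult_le_pos; auto). simpl. lra. }
    set (u := (m + dn * Z.of_nat M)%Z).
    assert (HIu : IZR u = IZR m + IZR dn * INR M).
    { unfold u. rewrite plus_IZR, mult_IZR, INR_IZR_INZ. reflexivity. }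
    assert (Hu : (0 <= u <= Z.of_nat N * Z.of_nat M - 1)%Z) by (unfold u; nia).
    rewrite (s_collapse M N Ts a x lpmax u (l_ i') (b i')).
    - apply zsum_ext; intros L HL. f_equal.
      + destruct (Z.leb_spec 0 (m - L)).
        * destruct (divmod_small (Z.of_nat M) (m - L) dn) as [E1 E2]. lia.
          replace (u - L)%Z with (m - L + dn * Z.of_nat M)%Z by (unfold u; lia).
          rewrite E1, E2. rewrite Z.mod_small by lia. rewrite Z.sub_0_r. apply Hx. lia.
        * destruct (divmod_small (Z.of_nat M) (m - L + Z.of_nat M) (dn - 1)) as [E1 E2]. lia.
          replace (u - L)%Z with (m - L + Z.of_nat M + (dn - 1) * Z.of_nat M)%Z by (unfold u; lia).
          rewrite E1, E2.
          destruct (divmod_small (Z.of_nat M) (m - L + Z.of_nat M) (-1)) as [E3 _]. lia.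
          replace (m - L + Z.of_nat M + -1 * Z.of_nat M)%Z with (m - L)%Z in E3 by lia.
          rewrite E3. apply Hx. lia.
      + f_equal. rewrite HIu. ring.
    - exact HM.
    - split; [exact Hlp0 | exact Hsync2].
    - exact Hu.
    - unfold T. rewrite HIu. ring.
    - intros L HL. apply Ha. rewrite HIu.
      rewrite <- HIu. eapply a_bound; eauto.
      rewrite HIu. split.
      + assert (0 <= IZR m) by (apply IZR_le; lia). assert (0 <= IZR dn) by (apply IZR_le; lia). nra.
      + replace (INR N * INR M - 1) with (IZR (Z.of_nat N * Z.of_nat M - 1)).
        rewrite <- HIu. apply IZR_le. lia.
        rewrite minus_IZR, mult_IZR, <- !INR_IZR_INZ. reflexivity. }
  unfold Y.
  transitivity (zsum 0 (Z.of_nat N - 1) (fun d => zsum 0 (Z.of_nat P - 1) (fun i => zsum 0 lpmax (fun L =>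
     zsum 0 (Z.of_nat N - 1) (fun n' =>
       Cmult (RtoC (/ INR N)) (Cmult (X ((m - L) mod Z.of_nat M)%Z n') (Cmult (h (Z.to_nat i))
        (Cmult (a ((IZR L - l_ (Z.to_nat i) + b (Z.to_nat i) * (IZR m + IZR d * INR M)) * Ts))
         (Cmult (cexpj (2 * PI * (k_ (Z.to_nat i) / (INR N * INR M * Ts)) * (IZR m * Ts + IZR d * T)))
          (Cmult (cexpj (2 * PI * IZR (n' * (d - (if (0 <=? m - L)%Z then 0%Z else 1%Z))) / INR N))
                 (cexpj (- (2 * PI * IZR (n * d) / INR N))))))))))))).
  { rewrite zsum_scal_l. apply zsum_ext; intros d Hd. rewrite Hy by auto.
    rewrite zsum_scal_r, zsum_scal_l. apply zsum_ext; intros i Hi.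
    match goal with |- Cmult ?c (Cmult (Cmult ?hE (zsum ?lo ?hi ?f)) ?en) = _ =>
      transitivity (Cmult (Cmult c (Cmult hE en)) (zsum lo hi f)); [ring|] end.
    rewrite zsum_scal_l. apply zsum_ext; intros L HL.
    match goal with |- Cmult ?K (Cmult (Cmult ?c2 (zsum ?lo ?hi ?g)) ?AA) = _ =>
      transitivity (Cmult (Cmult K (Cmult c2 AA)) (zsum lo hi g)); [ring|] end.
    rewrite zsum_scal_l. apply zsum_ext; intros n' Hn'. rewrite <- Hcs. ring. }
  rewrite swap4.
  symmetry.
  transitivity (zsum 0 lpmax (fun L => zsum 0 (Z.of_nat N - 1) (fun k => zsum 0 (Z.of_nat P - 1) (fun i =>
     zsum 0 (Z.of_nat N - 1) (fun d =>
       Cmult (RtoC (/ INR N)) (Cmult (X ((m - L) mod Z.of_nat M)%Z ((n - k) mod Z.of_nat N)%Z) (Cmult (h (Z.to_nat i))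
        (Cmult (a ((IZR L - l_ (Z.to_nat i) + b (Z.to_nat i) * (IZR m + IZR d * INR M)) * Ts))
         (Cmult (phi (m - L)%Z (n - k)%Z)
          (Cmult (cexpj (2 * PI * k_ (Z.to_nat i) * IZR m / (INR N * INR M)))
                 (cexpj (- (2 * PI * IZR d * (IZR k - k_ (Z.to_nat i)) / INR N))))))))))))).
  { apply zsum_ext; intros L HL. apply zsum_ext; intros k Hk. unfold G.
    rewrite zsum_scal_l. apply zsum_ext; intros i Hi. cbv beta zeta.
    match goal with |- Cmult ?A (Cmult ?B (Cmult ?c (zsum ?lo ?hi ?g))) = _ =>
      transitivity (Cmult (Cmult A (Cmult B c)) (zsum lo hi g)); [ring|] end.
    rewrite zsum_scal_l. apply zsum_ext; intros d Hd. ring. }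
  symmetry.
  apply zsum_ext; intros L HL.
  match goal with |- zsum _ _ ?F = _ =>
    rewrite <- (zsum_perm 0 (Z.of_nat N - 1) (fun k => ((n - k) mod Z.of_nat N)%Z) F) end.
  2:{ intros k Hk. pose proof (Z.mod_pos_bound (n - k) (Z.of_nat N)). lia. }
  2:{ intros k1 k2 Hk1 Hk2 E. rewrite !Z.mod_eq in E by lia.
        set (q1 := ((n - k1) / Z.of_nat N)%Z) in *. set (q2 := ((n - k2) / Z.of_nat N)%Z) in *.
        assert (E' : (Z.of_nat N * (q2 - q1) = k1 - k2)%Z) by lia.
        destruct (Z.lt_total q1 q2) as [H|[H|H]]; nia. }
  apply zsum_ext; intros k Hk. apply zsum_ext; intros i Hi. apply zsum_ext; intros d Hd.
  cbv beta.
  set (c := if (0 <=? m - L)%Z then 0%Z else 1%Z).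
  assert (Hphi : phi (m - L)%Z (n - k)%Z = cexpj (- (2 * PI * IZR c * IZR (n - k) / INR N))).
  { unfold phi, c. destruct (0 <=? m - L)%Z.
    - unfold cexpj, RtoC. replace (- (2 * PI * IZR 0 * IZR (n - k) / INR N)) with 0 by (simpl; field; lra).
      rewrite cos_0, sin_0. reflexivity.
    - f_equal. simpl; field; lra. }
  rewrite Hphi.
  match goal with |- Cmult ?c0 (Cmult ?Xa (Cmult ?hh (Cmult ?AA (Cmult ?E1 (Cmult ?E2 ?E3))))) =
                     Cmult _ (Cmult _ (Cmult _ (Cmult _ (Cmult ?F1 (Cmult ?F2 ?F3))))) =>
    transitivity (Cmult (Cmult c0 (Cmult Xa (Cmult hh AA))) (Cmult E1 (Cmult E2 E3)));
    [ring| transitivity (Cmult (Cmult c0 (Cmult Xa (Cmult hh AA))) (Cmult F1 (Cmult F2 F3))); [|ring]] end.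
  f_equal. rewrite !cexpj_add. apply cexpj_eq with (z := (- (((n - k) / Z.of_nat N) * (d - c)))%Z).
  rewrite Z.mod_eq by lia. set (q := ((n - k) / Z.of_nat N)%Z).
  unfold T. repeat rewrite ?mult_IZR, ?minus_IZR, ?opp_IZR, ?plus_IZR. rewrite !INR_IZR_INZ.
  field. repeat split; auto; lra.
Qed.
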